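(* For any $S\subseteq V$ and any $S$-restricted tree cover $\mathcal{T}(S)$ of $G$, the number of vertices of $V$ that have pseudo-degree greater than $s$ in some tree of $\mathcal{T}(S)$ is at most $\frac{|S|}{2d^{c+1}}$, i.e. $|\mathrm{Hi}(\mathcal{T}(S))|\le \frac{|S|}{2d^{c+1}}$.
   Context: $G=(V,E)$ is an undirected graph with $n\ge 3$ vertices and positive real edge weights; $\delta(u,v)$ denotes the distance in $G$. Let $k=\ln n$. For $S\subseteq V$, an $S$-restricted tree cover of $G$ is a family $\{T(w):w\in S\}$ of trees, where $T(w)$ is a subtree of $G$ (with $G$'s edge weights) rooted at $w$, such that: (i) for every $u\in S$, $v\in V$ there is $w\in S$ with $u,v\in V(T(w))$ and $\mathrm{dep}_{T(w)}(u)+\mathrm{dep}_{T(w)}(v)\le(2k-1)\delta(u,v)$, where $\mathrm{dep}_T(x)$ is the weighted distance in $T$ from $x$ to the root; (ii) every vertex of $V$ lies in at most $kn^{1/k}(\ln n+1)\ (\le 2e\ln^2 n)$ trees of the family. For a tree $T$ of the family, a vertex $v\in V(T)$ is a trunk vertex if there are $u,w\in S$ such that $v$ lies on the path from $u$ to $w$ in $T$; $\mathrm{Trunk}(T)$ is the subtree of $T$ induced by its trunk vertices; the pseudo-degree $\mathrm{pdeg}_T(v)$ of $v\in V(T)$ is its degree in $\mathrm{Trunk}(T)$ (and $0$ if $v$ is not a trunk vertex). Fix an integer $d\ge 2$ and a constant $c\ge 1$, and let $s=4e\cdot d^{c+1}\ln^2 n+1$. $\mathrm{Hi}(\mathcal{T}(S))$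 is the set of vertices of $V$ having pseudo-degree $>s$ in some tree of $\mathcal{T}(S)$. *)

(* Defs.v *)
From HB Require Import structures.
From mathcomp Require Import all_boot all_order all_algebra.
From mathcomp Require Import boolp classical_sets reals ereal sequences exp.
Set Implicit Arguments. Unset Strict Implicit. Unset Printing Implicit Defensive.
Import Order.TTheory GRing.Theory Num.Theory.
Local Open Scope ring_scope.

(* An undirected weighted graph on a finite vertex type V is given by an edge
   set E : {set {set V}} (each edge an unordered pair {a,b}, a <> b) and a
   weight function wt on edges. *)

Section Graphs.
Variables (V : finType) (R : realType).

Definition is_graph (E : {set {set V}}) : Prop :=
  forall e, e \in E -> #|e| = 2%N.

Definition pos_weights (E : {set {set V}}) (wt : {set V} -> R) : Prop :=
  forall e, e \in E -> 0 < wt e.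

Definition adjE (E : {set {set V}}) : rel V := fun a b => [set a; b] \in E.

(* p is (the tail of) a walk in E from u to v: u :: p *)
Definition walk (E : {set {set V}}) (u v : V) (p : seq V) : bool :=
  path (adjE E) u p && (last u p == v).

Definition walk_weight (wt : {set V} -> R) (u : V) (p : seq V) : R :=
  \sum_(e <- pairmap (fun a b => [set a; b]) u p) wt e.

(* weighted distance in the graph with edge set E (+oo if disconnected) *)
Definition wdist (E : {set {set V}}) (wt : {set V} -> R) (u v : V) : \bar R :=
  ereal_inf [set (walk_weight wt u p)%:E | p in [set p | walk E u v p]].

Definition sub_connected (VT : {set V}) (ET : {set {set V}}) : Prop :=
  forall u v, u \in VT -> v \in VT -> exists p, walk ET u v p.

(* a cycle: closed walk u :: p with last p = u, at least 3 distinct vertices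
   p, all distinct *)
Definition acyclic (ET : {set {set V}}) : Prop :=
  forall (u : V) (p : seq V),
    walk ET u u p -> uniq p -> (size p < 3)%N.

Definition rooted_subtree (E : {set {set V}}) (VT : {set V})
    (ET : {set {set V}}) (r : V) : Prop :=
  [/\ r \in VT, ET \subset E, (forall e, e \in ET -> e \subset VT),
      sub_connected VT ET & acyclic ET].

Definition dep (ET : {set {set V}}) (wt : {set V} -> R) (r x : V) : \bar R :=
  wdist ET wt x r.

Definition trunk_vertex (S : {set V}) (ET : {set {set V}}) (v : V) : Prop :=
  exists a b p, [/\ a \in S, b \in S, walk ET a b p, uniq (a :: p)
                  & v \in a :: p].

Definition trunk (S : {set V}) (VT : {set V}) (ET : {set {set V}}) : {set V} :=
  [set v in VT | `[< trunk_vertex S ET v >]].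

(* pseudo-degree: degree in Trunk(T), the subtree induced by the trunk
   vertices; 0 for non-trunk vertices *)
Definition pdeg (S : {set V}) (VT : {set V}) (ET : {set {set V}}) (v : V) : nat :=
  if v \in trunk S VT ET then
    #|[set e in ET | (v \in e) && (e \subset trunk S VT ET)]|
  else 0%N.

Definition restricted_tree_cover (E : {set {set V}}) (wt : {set V} -> R)
    (S : {set V}) (VT : V -> {set V}) (ET : V -> {set {set V}}) : Prop :=
  let n := #|V|%:R : R in
  let k := ln n in
  [/\ (forall w, w \in S -> rooted_subtree E (VT w) (ET w) w),
      (forall u v, u \in S ->
         exists2 w, w \in S &
           [/\ u \in VT w, v \in VT w &
               (dep (ET w) wt w u + dep (ET w) wt w v <=
                  ((2 * k - 1)%:E * wdist E wt u v))%E])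
    & (forall v, (#|[set w in S | v \in VT w]|%:R : R)
                   <= k * powR n k^-1 * (ln n + 1))].

Definition Hi (S : {set V}) (VT : V -> {set V}) (ET : V -> {set {set V}})
    (s : R) : {set V} :=
  [set v | [exists w in S, s < (pdeg S (VT w) (ET w) v)%:R]].

End Graphs.

(* Main.v *)
Require Import Defs.
From HB Require Import structures.
From mathcomp Require Import all_boot all_order all_algebra.
From mathcomp Require Import boolp classical_sets reals ereal sequences exp.
From mathcomp Require Import zify ring lra.
Import Order.TTheory GRing.Theory Num.Theory.
Set Implicit Arguments. Unset Strict Implicit. Unset Printing Implicit Defensive.
Local Notation subsetP := fintype.subsetP.
Local Notation setUC := finset.setUC.
Local Notation set0 := finset.set0.
Local Notation cover := finset.cover.
Local Notation setIidPr := finset.setIidPr.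
Local Notation set0Pn := finset.set0Pn.
Local Notation subUset := finset.subUset.
Local Notation sub1set := finset.sub1set.

Section G.
Variable V : finType.
Implicit Types F : {set {set V}}.

Definition two F := forall e, e \in F -> #|e| = 2.

Lemma adjE_sub F F' : F \subset F' -> subrel (adjE F) (adjE F').
Proof. by move=> /subsetP sub x y; rewrite /adjE => /sub. Qed.

Lemma acyclic_sub F F' : F \subset F' -> acyclic F' -> acyclic F.
Proof.
move=> sub ac u p /andP[pp lp] up; apply: (ac u p) _ up.
by rewrite /walk lp andbT; apply: sub_path pp; exact: adjE_sub.
Qed.

Lemma two_sub F F' : F \subset F' -> two F' -> two F.
Proof. by move=> /subsetP sub h e /sub /h. Qed.

Lemma edge2 F e x : two F -> e \in F -> x \in e ->
  exists y, y != x /\ e = [set x; y].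
Proof.
move=> h eF xe; have /eqP := h e eF; case/cards2P => [a [b [ab de]]].
move: xe; rewrite de !inE => /orP[/eqP->|/eqP->].
  by exists b; rewrite eq_sym.
by exists a; rewrite setUC.
Qed.

Lemma adj_neq F x y : two F -> adjE F x y -> x != y.
Proof. by move=> h xy; have := h _ xy; rewrite cards2; case: (x != y). Qed.

Definition leafp F := exists e v,
  [/\ e \in F, v \in e & forall e', e' \in F -> v \in e' -> e' = e].

Lemma leaf_ext F : two F -> acyclic F -> forall n x0 p,
  (#|V| - size p <= n)%N -> p != [::] -> path (adjE F) x0 p ->
  uniq (x0 :: p) -> leafp F.
Proof.
move=> h ac; elim=> [|n IH] x0 p Hn pn0 pp up.
  have := max_card (mem (x0 :: p)); rewrite (card_uniqP up) /= => H.
  by move: Hn; rewrite leqn0 subn_eq0 => H2; have := leq_trans H H2; rewrite ltnn.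
case: p pn0 pp up Hn => [//|x1 p] _ pp up Hn.
case: (pselect (exists e', [/\ e' \in F, x0 \in e' & e' != [set x0; x1]]))
  => [[e' [e'F x0e' ne]]|nex]; last first.
  exists [set x0; x1], x0; split.
  - by move: pp => /= /andP[].
  - by rewrite !inE eqxx.
  move=> e' e'F x0e'; apply/eqP; apply/negPn/negP => ne; apply: nex.
  by exists e'.
have [y [yx0 de']] := edge2 h e'F x0e'.
have e'adj : adjE F y x0 by rewrite /adjE setUC -de'.
case yin: (y \in x0 :: x1 :: p).
  have yx1 : y != x1.
    by apply: contraNneq ne => yx1; rewrite de' yx1 eqxx.
  move: yin; rewrite !in_cons (negbTE yx0) (negbTE yx1) /= => yin.
  move: pp up; case/splitPr: yin => p1 p2 pp up.
  have W : walk F x0 x0 (x1 :: p1 ++ [:: y; x0]).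
    rewrite /walk /= last_cat /= eqxx andbT.
    move: pp; rewrite /= cat_path /= => /and3P[a1 a2 /andP[a3 _]].
    by rewrite cat_path /= a1 a2 a3 e'adj.
  have u2 : uniq (x0 :: x1 :: p1 ++ [:: y]).
    apply: subseq_uniq up; rewrite -!cat_cons; apply: cat_subseq; first exact: subseq_refl.
    exact: (prefix_subseq [:: y] p2).
  have U : uniq (x1 :: p1 ++ [:: y; x0]).
    have -> : x1 :: p1 ++ [:: y; x0] = rcons (x1 :: p1 ++ [:: y]) x0.
      by rewrite -cats1 /= -catA.
    by rewrite rcons_uniq; exact: u2.
  have := ac _ _ W U; rewrite /= size_cat /= addn2.
  by [].
apply: (IH y (x0 :: x1 :: p)) => //=.
- by move: Hn => /=; lia.
- by rewrite e'adj.
- by rewrite yin.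
Qed.

Lemma forest F : two F -> acyclic F -> F != set0 -> (#|F| < #|cover F|)%N.
Proof.
move: {2}#|F| (leqnn #|F|) => m; elim: m F => [|m IH] F hm h ac nF.
  by move: hm; rewrite leqn0 cards_eq0 (negbTE nF).
have leaf : leafp F.
  case/set0Pn: nF => e0 e0F.
  have /eqP := h e0 e0F; case/cards2P => [a [b [ab de]]].
  apply: (@leaf_ext F h ac #|V| a [:: b]) => //.
  - exact: leq_subr.
  - by rewrite /= andbT /adjE -de.
  - by rewrite /= inE ab.
case: leaf => e [v [eF ve lf]].
have eC : e \subset cover F by apply: finset.bigcup_sup.
have Fd := cardsD1 e F; rewrite eF in Fd.
case: (eqVneq (F :\ e) set0) => [F0|nF'].
  by rewrite Fd F0 cards0 (leq_trans _ (subset_leq_card eC)) // h.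
have sub : F :\ e \subset F by apply: subD1set.
have := IH (F :\ e) _ (two_sub sub h) (acyclic_sub sub ac) nF'.
have -> : (#|F :\ e| <= m)%N by move: hm; rewrite Fd.
move=> /(_ isT) lt.
have vC : v \in cover F by apply: (subsetP eC).
have cs : cover (F :\ e) \subset cover F :\ v.
  apply/subsetP => x /finset.bigcupP [e' /setD1P [ne e'F] xe'].
  rewrite !inE; apply/andP; split.
    by apply: contra ne => /eqP xv; apply/eqP; apply: lf => //; rewrite -xv.
  by apply/finset.bigcupP; exists e'.
have := subset_leq_card cs; rewrite (cardsD1 v (cover F)) vC => H.
by rewrite Fd add1n ltnS (leq_trans lt).
Qed.

Lemma trunk_deg2 (S VTw : {set V}) (ET : {set {set V}}) v :
  two ET -> (forall e, e \in ET -> e \subset VTw) ->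
  v \in trunk S VTw ET -> v \notin S ->
  (2 <= #|[set e in ET | (v \in e) && (e \subset trunk S VTw ET)]|)%N.
Proof.
move=> h sub vT vS.
have := vT; rewrite /trunk inE => /andP[vV /asboolP [a [b [p [aS bS w up vin]]]]].
have inT : forall x e, x \in a :: p -> e \in ET -> x \in e -> x \in trunk S VTw ET.
  move=> x e xin eE xe; rewrite /trunk inE; apply/andP; split.
    exact: (subsetP (sub e eE)).
  by apply/asboolP; exists a, b, p.
have va : v != a by apply: contraNneq vS => ->.
move: vin; rewrite in_cons (negbTE va) /= => vin.
move: w up inT; case/splitPr: vin => p1 p2 w up inT.
case: p2 w up inT => [|z p3] w up inT.
  by move: w => /andP[_]; rewrite last_cat /= => /eqP vb; move: vS; rewrite vb bS.
move: (w) => /andP[]; rewrite cat_path /= => /and3P[_ uv /andP[vz _]] _.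
set u := last a p1 in uv.
have uin : u \in a :: p1 by apply: mem_last.
move: (up); rewrite -cat_cons cat_uniq => /and3P[_ hn _].
have vn : v \notin a :: p1 by apply: contra hn => vi; apply/hasP; exists v; rewrite ?inE ?eqxx.
have zn : z \notin a :: p1 by apply: contra hn => vi; apply/hasP; exists z; rewrite ?inE ?eqxx ?orbT.
have uv' : u != v by apply: contraNneq vn => <-.
have uz : u != z by apply: contraNneq zn => <-.
have uvE : [set u; v] \in ET := uv.
have vzE : [set v; z] \in ET := vz.
have mem1 : forall x, x \in a :: p1 -> x \in a :: p1 ++ v :: z :: p3.
  by move=> x; rewrite -cat_cons mem_cat => ->.
have vin2 : v \in a :: p1 ++ v :: z :: p3 by rewrite -cat_cons mem_cat !inE eqxx orbT.
have zin2 : z \in a :: p1 ++ v :: z :: p3 by rewrite -cat_cons mem_cat !inE eqxx !orbT.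
have e1 : [set u; v] \in [set e in ET | (v \in e) && (e \subset trunk S VTw ET)].
  have tu := inT u _ (mem1 _ uin) uvE (setU11 _ _).
  have tv := inT v _ vin2 uvE (setU1r _ (set11 _)).
  by rewrite inE uvE setU1r ?set11 //= subUset !sub1set tu tv.
have e2 : [set v; z] \in [set e in ET | (v \in e) && (e \subset trunk S VTw ET)].
  have tv := inT v _ vin2 vzE (setU11 _ _).
  have tz := inT z _ zin2 vzE (setU1r _ (set11 _)).
  by rewrite inE vzE setU11 /= subUset !sub1set tz tv.
have ne : [set u; v] != [set v; z].
  apply/negP => /eqP E12; have : u \in [set v; z] by rewrite -E12 !inE eqxx.
  by rewrite !inE (negbTE uv') (negbTE uz).
have := subset_leq_card (_ : [set [set u; v]; [set v; z]] \subset _).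
rewrite cards2 ne; apply; by rewrite subUset !sub1set e1 e2.
Qed.

Lemma sum_ind (X : finType) (T A : {set X}) : (\sum_(v in T) (v \in A : nat) = #|T :&: A|)%N.
Proof.
rewrite (eq_bigr (fun v => if v \in A then 1 else 0)%N); last by move=> v _; case: (v \in A).
rewrite -big_mkcondr sum1dep_card; apply: eq_card => v; by rewrite !inE.
Qed.

Local Open Scope ring_scope.

Lemma tree_count (R : realType) (S VTw : {set V}) (ET : {set {set V}}) (s : R) :
  two ET -> (forall e, e \in ET -> e \subset VTw) -> acyclic ET -> 2 < s ->
  #|[set v | s < (pdeg S VTw ET v)%:R]|%:R * (s - 2)
     <= #|[set u in S | u \in VTw]|%:R.
Proof.
move=> h sub ac s2.
set T := trunk S VTw ET.
pose deg v := #|[set e in ET | (v \in e) && (e \subset T)]|.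
pose F := [set e in ET | e \subset T].
pose T0 := [set v in T | deg v == 0%N].
pose T1 := [set v in T | deg v == 1%N].
pose H := [set v in T | s < (deg v)%:R].
have s0 : 0 < s by lra.
have HE : [set v | s < (pdeg S VTw ET v)%:R] = H.
  apply/setP => v; rewrite [in LHS]inE [in RHS]inE /pdeg -/T; case: (v \in T) => //=.
  by apply/negbTE; rewrite -leNgt ltW.
rewrite HE.
have FT : F \subset ET by apply/subsetP => e; rewrite inE => /andP[].
have degF : forall v, deg v = (\sum_(e in F) (v \in e : nat))%N.
  move=> v; rewrite (_ : (\sum_(e in F) (v \in e : nat) = \sum_(e in F) (e \in [set x : {set V} | v \in x] : nat))%N); last by apply: eq_bigr => e _; rewrite inE.
  rewrite sum_ind; apply: eq_card => e; rewrite !inE; by case: (v \in e); rewrite ?andbT ?andbF.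
have hs : (\sum_(v in T) deg v = #|F| * 2)%N.
  rewrite (eq_bigr _ (fun v _ => degF v)) exchange_big /= -sum_nat_const.
  apply: eq_bigr => e; rewrite inE => /andP[eE eT].
  by rewrite sum_ind; move/setIidPr: eT => ->; rewrite h.
have T1S : T1 \subset [set u in S | u \in VTw].
  apply/subsetP => v; rewrite [v \in T1]inE => /andP[vT /eqP d1]; rewrite inE.
  have vV : v \in VTw by move: (vT); rewrite /T /trunk inE => /andP[].
  rewrite vV andbT; apply/negPn/negP => vS.
  by have := trunk_deg2 h sub vT vS; rewrite -/T -/(deg v) d1.
case: (eqVneq F set0) => [F0|nF].
  have -> : H = set0.
    apply/setP => v; rewrite !inE; apply/negbTE; apply/negP => /andP[_].
    have -> : deg v = 0%N.
      by rewrite degF F0 big_set0.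
    by rewrite ltNge ltW.
  by rewrite cards0 mul0r ler0n.
have forF : (#|F| + #|T0| + 1 <= #|T|)%N.
  have := forest (two_sub FT h) (acyclic_sub FT ac) nF.
  have cs : cover F \subset T :\: T0.
    apply/subsetP => x /finset.bigcupP [e eF xe]; rewrite finset.in_setD [x \in T0]inE.
    move: eF; rewrite inE => /andP[eE eT].
    have xT : x \in T by apply: (subsetP eT).
    rewrite xT andbT /= -lt0n /deg card_gt0; apply/set0Pn; exists e.
    by rewrite inE eE xe eT.
  have := subset_leq_card cs; rewrite cardsD.
  have -> : T :&: T0 = T0 by apply/setIidPr/subsetP => x; rewrite inE => /andP[].
  have : (#|T0| <= #|T|)%N by apply/subset_leq_card/subsetP => x; rewrite inE => /andP[].
  lia.
pose X := (\sum_(v in T) (v \in H) * (deg v - 2))%N.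
have pw : forall v, v \in T ->
    (2 + (v \in H) * (deg v - 2) <= deg v + (v \in T0) + (v \in T0) + (v \in T1))%N.
  move=> v vT; rewrite [v \in T0]inE [v \in T1]inE [v \in H]inE vT /=.
  case vH: (s < (deg v)%:R).
    have : (2 < deg v)%N by rewrite -(ltr_nat R); apply: lt_trans vH.
    case: (deg v) => [|[|[|k]]] //= _; lia.
  case: (deg v) => [|[|k]] //=; lia.
have := @leq_sum V (index_enum V) (fun v => v \in T) _ _ pw.
rewrite !big_split /= !sum_ind sum_nat_const hs -/X.
have -> : T :&: T0 = T0 by apply/setIidPr/subsetP => x; rewrite inE => /andP[].
have -> : T :&: T1 = T1 by apply/setIidPr/subsetP => x; rewrite inE => /andP[].
move=> ineq.
have XT1 : (X <= #|T1|)%N by lia.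
have XR : #|H|%:R * (s - 2) <= X%:R.
  have -> : #|H| = (\sum_(v in T) (v \in H : nat))%N.
    have HT : H \subset T by apply/subsetP => x; rewrite inE => /andP[].
    by rewrite sum_ind (setIidPr HT).
  rewrite !natr_sum mulr_suml; apply: ler_sum => v vT.
  rewrite inE vT /=; case vH: (s < (deg v)%:R); last by rewrite mul0r.
  have d2 : (2 <= deg v)%N by rewrite -(ler_nat R); apply: ltW; apply: lt_trans vH.
  by rewrite mul1r mul1n natrB // lerD2r ltW.
apply: (le_trans XR); rewrite ler_nat (leq_trans XT1) //; exact: subset_leq_card.
Qed.


End G.
Unset Implicit Arguments.
Local Open Scope ring_scope.
Lemma e_bounds (R : realType) : 9/4 <= expR (1:R) <= 281/100.
Proof.
apply/andP; split.
  have -> : expR (1:R) = expR (1/2) * expR (1/2) by rewrite -expRD; congr expR; lra.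
  have := expR_ge1Dx (1/2 : R); move: (expR (1/2 : R)) => x hx.
  have hx' : 3/2 <= x by lra.
  nra.
set t := expR (1/16 : R).
have -> : expR (1:R) = t ^+ 16.
  by rewrite /t -expRM_natl; congr expR; lra.
have t0 : 0 < t by apply: expR_gt0.
have h1 := expRxMexpNx_1 (1/16 : R); rewrite -/t in h1.
have h2 := expR_ge1Dx (- (1/16) : R).
have tb : t <= 16/15 by nra.
have -> : t ^+ 16 = (((t ^+ 2) ^+ 2) ^+ 2) ^+ 2 by rewrite -!exprM.
have a1 : t ^+ 2 <= 11378/10000 by rewrite expr2; nra.
have a1' : 0 <= t ^+ 2 by apply: exprn_ge0; lra.
have a2 : (t ^+ 2) ^+ 2 <= 12946/10000 by rewrite [X in X <= _]expr2; nra.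
have a2' : 0 <= (t ^+ 2) ^+ 2 by apply: exprn_ge0.
have a3 : ((t ^+ 2) ^+ 2) ^+ 2 <= 16760/10000 by rewrite [X in X <= _]expr2; nra.
have a3' : 0 <= ((t ^+ 2) ^+ 2) ^+ 2 by apply: exprn_ge0.
by rewrite [X in X <= _]expr2; nra.
Qed.

Lemma ln3_bound (R : realType) : 2 - expR (1:R) / 3 <= ln (3:R).
Proof.
have e0 : 0 < expR (1:R) by apply: expR_gt0.
have h : ln (expR (1:R) / 3) <= expR 1 / 3 - 1.
  have := @le_ln1Dx R (expR 1 / 3 - 1).
  rewrite (_ : 1 + _ = expR (1:R) / 3); last by lra.
  by apply; lra.
rewrite ln_div in h; [|by rewrite posrE|by rewrite posrE].
rewrite expRK in h; lra.
Qed.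

Theorem lemma2p4 (R : realType) (V : finType) (E : {set {set V}})
    (wt : {set V} -> R) (d : nat) (c : R)
    (S : {set V}) (VT : V -> {set V}) (ET : V -> {set {set V}}) :
  (3 <= #|V|)%N ->
  is_graph E -> pos_weights E wt ->
  (2 <= d)%N -> 1 <= c ->
  restricted_tree_cover E wt S VT ET ->
  let n := #|V|%:R : R in
  let s := 4 * expR 1 * powR d%:R (c + 1) * ln n ^+ 2 + 1 in
  (#|Hi S VT ET s|%:R : R) <= #|S|%:R / (2 * powR d%:R (c + 1)).
Proof.
move=> n3 hG hw d2 c1 [Hroot _ Hload]; cbv zeta.
set n := #|V|%:R : R.
set k := ln n.
set e := expR (1:R).
set D := powR d%:R (c + 1).
set s := 4 * e * D * k ^+ 2 + 1.
have n3R : 3 <= n by rewrite /n ler_nat.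
have k3 : ln 3 <= k by rewrite /k ler_ln ?posrE //; lra.
have [e1 e2] := andP (e_bounds R); rewrite -/e in e1 e2.
have l3 := ln3_bound R; rewrite -/e in l3.
have dR : 2 <= d%:R :> R by rewrite ler_nat.
have D4 : 4 <= D.
  have : powR d%:R 2 <= D by rewrite /D ler_powR //; lra.
  rewrite powR_mulrn ?expr2; last by lra.
  by move=> h; apply: le_trans h; nra.
have k1 : 19/300 <= k - 1 by lra.
have kk : 19/300 <= k * (k - 1) by nra.
have eD : 9 <= e * D by nra.
have key : 1 <= 2 * (e * D) * (k * (k - 1)) by nra.
have pe : powR n k^-1 = e.
  rewrite /powR (_ : (n == 0) = false); last by apply/negbTE; rewrite gt_eqF //; lra.
  rewrite -/k mulVf // gt_eqF //; lra.
rewrite -/n -/k pe in Hload.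
set B := k * e * (k + 1).
have B0 : 0 <= B by rewrite /B; apply: mulr_ge0; [apply: mulr_ge0|]; lra.
have s2 : 2 < s by rewrite /s; nra.
have BD : B * (2 * D) <= s - 2 by rewrite /B /s; nra.
pose Hw w := [set v | s < (pdeg S (VT w) (ET w) v)%:R].
have tree : forall w, w \in S ->
    #|Hw w|%:R * (s - 2) <= #|[set u in S | u \in VT w]|%:R.
  move=> w wS; have [_ sE sub _ ac] := Hroot w wS.
  apply: tree_count => //.
  by move=> f /(subsetP sE); apply: hG.
have HiU : (#|Hi S VT ET s| <= \sum_(w in S) #|Hw w|)%N.
  have : Hi S VT ET s \subset \bigcup_(w in S) Hw w.
    apply/subsetP => v; rewrite inE => /existsP [w /andP[wS hv]].
    by apply/finset.bigcupP; exists w => //; rewrite inE.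
  move/subset_leq_card/leq_trans; apply.
  apply: (big_ind2 (fun (A : {set V}) (m : nat) => #|A| <= m)%N).
  - by rewrite cards0.
  - move=> A x B' y hA hB; apply: leq_trans (leq_card_setU A B').1 _.
    exact: leq_add.
  - by [].
have dc : (\sum_(w in S) #|[set u in S | u \in VT w]| =
           \sum_(u in S) #|[set w in S | u \in VT w]|)%N.
  have e1' : forall w, #|[set u in S | u \in VT w]| = (\sum_(u in S) (u \in VT w : nat))%N.
    by move=> w; rewrite sum_ind; apply: eq_card => u; rewrite !inE.
  have e2' : forall u, #|[set w in S | u \in VT w]| =
      (\sum_(w in S) (w \in [set x | u \in VT x] : nat))%N.
    by move=> u; rewrite sum_ind; apply: eq_card => w; rewrite !inE.
  rewrite (eq_bigr _ (fun w _ => e1' w)) (eq_bigr _ (fun u _ => e2' u)) exchange_big /=.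
  by apply: eq_bigr => u _; apply: eq_bigr => w _; rewrite inE.
have main : #|Hi S VT ET s|%:R * (s - 2) <= #|S|%:R * B.
  apply: (le_trans (y := (\sum_(w in S) #|Hw w|)%:R * (s - 2))).
    by apply: ler_wpM2r; [lra|rewrite ler_nat].
  rewrite natr_sum mulr_suml.
  apply: (le_trans (y := \sum_(w in S) #|[set u in S | u \in VT w]|%:R)).
    by apply: ler_sum => w wS; apply: tree.
  rewrite -natr_sum dc natr_sum.
  apply: (le_trans (y := \sum_(u in S) B)); first by apply: ler_sum => u _; apply: Hload.
  by rewrite sumr_const mulr_natl.
rewrite ler_pdivlMr; last by lra.
have x0 : 0 <= #|Hi S VT ET s|%:R :> R by apply: ler0n.
have y0 : 0 <= #|S|%:R :> R by apply: ler0n.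
move: main x0 y0; move: (#|Hi S VT ET s|%:R : R) (#|S|%:R : R) => x y main x0 y0.
have h3 : x * (s - 2) * (2 * D) <= y * (s - 2).
  apply: (le_trans (y := y * B * (2 * D))).
    by apply: ler_wpM2r; [lra|].
  by rewrite -mulrA; apply: ler_wpM2l.
rewrite -(@ler_pM2r _ (s - 2)); last by lra.
by rewrite mulrAC.
Qed.
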